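(* Let $n, r$ be positive integers with $n\geqslant\lceil r/2\rceil+2$. Then $m(L(K_n),r)\geqslant\lfloor (r+2)^2/8\rfloor$.
   Context: All graphs are finite, simple and undirected. For a nonnegative integer $r$ and a graph $G$, the $r$-neighbor bootstrap percolation process on $G$ starts with a set $A_0\subseteq V(G)$ of initially active vertices, and for $i\geqslant 1$, $A_i=A_{i-1}\cup\{v\in V(G) : |N(v)\cap A_{i-1}|\geqslant r\}$, where $N(v)$ is the set of neighbors of $v$. The set $A_0$ is a percolating set if $\bigcup_{i\geqslant 0}A_i=V(G)$; $m(G,r)$ is the minimum size of a percolating set. $L(G)$ is the line graph of $G$ (vertex set $E(G)$, two vertices adjacent iff the edges share an endpoint), and $K_n$ is the complete graph on $n$ vertices. *)

(* Defs.v *)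
From mathcomp Require Import all_boot.
From mathcomp Require Import boolp.
Set Implicit Arguments. Unset Strict Implicit. Unset Printing Implicit Defensive.

(* A finite simple graph: vertex type T with adjacency relation e
   (assumed symmetric and irreflexive where it matters). *)

Definition nbhd (T : finType) (e : rel T) (v : T) : {set T} := [set u | e v u].

Definition bp_step (T : finType) (e : rel T) (r : nat) (A : {set T}) : {set T} :=
  A :|: [set v | r <= #|nbhd e v :&: A|].

Definition bp_iter (T : finType) (e : rel T) (r : nat) (A0 : {set T}) (i : nat) :=
  iter i (bp_step e r) A0.

(* A0 percolates iff the union of all A_i is V(G), i.e. some A_i = V(G)
   (the A_i are increasing). *)
Definition percolating (T : finType) (e : rel T) (r : nat) (A0 : {set T}) : Prop :=
  forall v : T, exists i, v \in bp_iter e r A0 i.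

(* m(G, r): the minimum size of a percolating set.  V(G) itself percolates,
   so taking the min with default #|T| gives exactly the minimum. *)
Definition m_perc (T : finType) (e : rel T) (r : nat) : nat :=
  \big[minn/#|T|]_(A : {set T} | `[< percolating e r A >]) #|A|.

(* The line graph of K_n: vertices are the edges of K_n, i.e. 2-element subsets
   of 'I_n; two are adjacent iff they are distinct and share an endpoint. *)
Definition KnEdge (n : nat) := {S : {set 'I_n} | #|S| == 2}.

Definition LKn_adj (n : nat) : rel (KnEdge n) :=
  fun x y => (x != y) && ~~ [disjoint val x & val y].

(* Main.v *)
Require Import Defs.
From mathcomp Require Import all_boot zify.
From mathcomp Require Import boolp.
Set Implicit Arguments. Unset Strict Implicit. Unset Printing Implicit Defensive.

Definition EW n (W : {set 'I_n}) : {set KnEdge n} := [set e : KnEdge n | val e \subset W].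
Definition Bstep n (D : {set KnEdge n}) q (B : {set KnEdge n}) :=
  B :|: [set e in D | q <= #|nbhd (@LKn_adj n) e :&: B|].
Definition Biter n (D : {set KnEdge n}) q (A : {set KnEdge n}) i :=
  iter i (@Bstep n D q) (A :&: D).

Lemma BiterS n D q A i : @Biter n D q A i.+1 = Bstep D q (Biter D q A i).
Proof. by []. Qed.

Lemma Biter_sub n D q A i : @Biter n D q A i \subset D.
Proof.
elim: i => [|i IH]; first exact: subsetIr.
rewrite /Biter /= /Bstep subUset IH /=.
by apply/subsetP => x; rewrite inE => /andP[].
Qed.

Lemma card_meet n (X Y : {set 'I_n}) : [disjoint X & Y] ->
  #|[set h : KnEdge n | ~~ [disjoint val h & X] && ~~ [disjoint val h & Y]]|
    <= #|X| * #|Y|.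
Proof.
move=> dXY.
rewrite -(card_imset _ val_inj) -cardsX.
apply: leq_trans (leq_imset_card (fun p : 'I_n * 'I_n => [set p.1; p.2]) _).
apply: subset_leq_card; apply/subsetP => B /imsetP [h]; rewrite inE => /andP [hX hY] ->.
move: hX hY; rewrite -!setI_eq0 => /set0Pn [u] /setIP [uh uX] /set0Pn [v] /setIP [vh vY].
have uv : u != v.
  apply: contraTneq dXY => Euv; rewrite -setI_eq0; apply/set0Pn; exists u.
  by rewrite inE uX Euv vY.
apply/imsetP; exists (u, v); first by rewrite inE /= uX vY.
apply/eqP; rewrite /= eq_sym eqEcard.
by rewrite subUset !sub1set uh vh /= cards2 uv (eqP (valP h)).
Qed.

Lemma card_EW n (W : {set 'I_n}) : #|EW W| = 'C(#|W|, 2).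
Proof.
rewrite -cards_draws -(card_imset _ val_inj); apply: eq_card => B.
rewrite inE; apply/imsetP/andP => [[e] | [BW B2]].
  by rewrite inE => eW ->; split => //; by case: (e) => S HS.
by exists (exist (fun S : {set 'I_n} => #|S| == 2) B B2); rewrite // inE.
Qed.

Lemma iter_fix (T : finType) (F : {set T} -> {set T}) (B : {set T}) i :
  F B = B -> iter i F B = B.
Proof. by move=> FB; elim: i => //= i ->. Qed.

Lemma fmain n q : forall (W : {set 'I_n}) (A : {set KnEdge n}),
  (q + 1) %/ 2 + 2 <= #|W| ->
  (forall e, e \in EW W -> exists i, e \in Biter (EW W) q A i) ->
  (q + 2) ^ 2 %/ 8 <= #|A :&: EW W|.
Proof.
elim/ltn_ind: q => q IHq W A Hw Hp.
have [sub|nsub] := boolP (EW W \subset A).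
  rewrite (setIidPr sub) card_EW bin2.
  move: Hw; set w := #|W|; move=> Hw; nia.
have [/existsP [f /andP [fB1 fB0]] | nex] :=
    boolP [exists f, (f \in Bstep (EW W) q (A :&: EW W)) && (f \notin A :&: EW W)].
  move: fB1; rewrite /Bstep inE (negPf fB0) /= inE => /andP [fW Hq].
  set W' := W :\: val f.
  have fsubW : val f \subset W by move: fW; rewrite inE.
  have cW' : #|W'| = #|W| - 2.
    by rewrite cardsD (setIidPr fsubW) (eqP (valP f)).
  have Hsplit : #|A :&: EW W'| + q <= #|A :&: EW W|.
    rewrite -(cardsID (EW W') (A :&: EW W)) leq_add //.
      apply: subset_leq_card; apply/subsetP => x; rewrite !inE.
      move=> /andP [xA xW']; rewrite xA xW' andbT /=.
      apply: subset_trans xW' _; exact: subsetDl.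
    apply: leq_trans Hq _; apply: subset_leq_card; apply/subsetP => x.
    rewrite !inE => /andP [/andP [_ dfx] /andP [xA xW]].
    rewrite xA xW /= andbT.
    apply: contra dfx => xW'.
    rewrite -setI_eq0; apply/eqP/setP => u; rewrite !inE.
    apply/negbTE; apply/negP => /andP [uf ux].
    by move/subsetP: xW' => /(_ u ux); rewrite inE uf.
  have [q4|q4] := ltnP q 4.
    apply: (leq_trans _ Hsplit); apply: leq_trans (leq_addl _ _).
    by move: q4; clear; case: q => [|[|[|[|]]]].
  have ltq : q - 4 < q by lia.
  have IH := IHq (q - 4) ltq W' A.
  have : (q - 4 + 2) ^ 2 %/ 8 <= #|A :&: EW W'|.
    apply: IH; first by lia.
    have key : forall i, Biter (EW W) q A i :&: EW W' \subset Biter (EW W') (q - 4) A i.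
      elim => [|i IHi].
        apply/subsetP => x; rewrite !inE => /andP [/andP [-> _] ->] //.
      apply/subsetP => x; rewrite inE => /andP [].
      rewrite !BiterS /Bstep inE => /orP [xBi|xBi] xW'.
        by rewrite inE (subsetP IHi) // inE xBi xW'.
      move: xBi; rewrite inE => /andP [_ Hqx].
      rewrite inE; apply/orP; right; rewrite inE xW' /=.
      have Bsub := Biter_sub (EW W) q A i.
      set S := [set h : KnEdge n | ~~ [disjoint val h & val x] && ~~ [disjoint val h & val f]].
      have cS : #|S| <= 4.
        apply: leq_trans (card_meet _) _.
          rewrite -setI_eq0; apply/eqP/setP => u; rewrite !inE.
          apply/negbTE/negP => /andP [ux uf].
          by move: xW'; rewrite inE => /subsetP /(_ u ux); rewrite inE uf.
        by rewrite (eqP (valP x)) (eqP (valP f)).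
      have : #|nbhd (LKn_adj (n:=n)) x :&: Biter (EW W) q A i| <=
             #|nbhd (LKn_adj (n:=n)) x :&: Biter (EW W') (q - 4) A i| + #|S|.
        apply: leq_trans (leq_card_setU _ _).
        apply: subset_leq_card; apply/subsetP => h.
        rewrite !inE => /andP [xh hB].
        move: (xh); rewrite /LKn_adj => /andP [xh' dxh].
        rewrite xh' dxh /=.
        have hW : h \in EW W by exact: (subsetP Bsub).
        have [hW'|hW'] := boolP (h \in EW W').
          by rewrite (subsetP IHi) // inE hB hW'.
        apply/orP; right; rewrite disjoint_sym dxh /=.
        apply: contra hW' => dhf; rewrite inE; apply/subsetP => u uh.
        rewrite inE; move: hW; rewrite inE => /subsetP /(_ u uh) ->; rewrite andbT.
        apply/negP => uf; move: dhf; rewrite -setI_eq0 => /eqP /setP /(_ u).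
        by rewrite !inE uh uf.
      move=> H; rewrite leq_subLR addnC; apply: (leq_trans Hqx); apply: (leq_trans H); by rewrite leq_add2l.
    move=> e eW'; have eW : e \in EW W.
      move: eW'; rewrite !inE => /subset_trans; apply; exact: subsetDl.
    have [i Hi] := Hp e eW; exists i.
    by rewrite (subsetP (key i)) // inE Hi eW'.
  move=> H; apply: (leq_trans _ Hsplit).
  have -> : (q + 2) ^ 2 = (q - 4 + 2) ^ 2 + q * 8 by move: q4; clear; nia.
  by rewrite divnDr ?dvdn_mull // mulnK // leq_add2r.
exfalso; move/negP: nsub; apply; apply/subsetP => e eW.
have [i Hi] := Hp e eW.
have fx : Bstep (EW W) q (A :&: EW W) = A :&: EW W.
  apply/eqP; rewrite eqEsubset; apply/andP; split; last exact: subsetUl.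
  apply/subsetP => x xB; apply/negPn/negP => xn.
  by move/negP: nex; apply; apply/existsP; exists x; rewrite xB xn.
by move: Hi; rewrite /Biter iter_fix // inE => /andP [].
Qed.

Theorem lemma5p3 (n r : nat) :
  0 < n -> 0 < r -> (r + 1) %/ 2 + 2 <= n ->
  (r + 2) ^ 2 %/ 8 <= m_perc (@LKn_adj n) r.
Proof.
move=> n0 r0 Hn.
have EWT : EW [set: 'I_n] = [set: KnEdge n].
  by apply/setP => e; rewrite !inE subsetT.
have BI : forall A i, Biter [set: KnEdge n] r A i = bp_iter (@LKn_adj n) r A i.
  move=> A; elim => [|i IH]; first by rewrite /Biter /= setIT.
  rewrite BiterS IH; apply/setP => x.
  by rewrite /Bstep /bp_step /bp_iter /= !inE.
rewrite /m_perc.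
elim/big_ind: _ => [| x y Hx Hy | A HA].
- rewrite -cardsT -EWT card_EW cardsT card_ord bin2; nia.
- by rewrite leq_min Hx Hy.
- move/asboolP: HA => HA.
  have := @fmain n r [set: 'I_n] A.
  rewrite EWT setIT; apply; first by rewrite cardsT card_ord.
  move=> e _; have [i Hi] := HA e; exists i; by rewrite BI.
Qed.
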